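(* Let $\Pi$ be the topological prismatoid \#2669 of Criado and Santos: a polyhedral $4$-sphere on the $14$ vertices $0,1,2,3,4,5,6,a,b,c,d,e,f,g$ whose simplicial facets are exactly the following $4$-simplices (each string lists the five vertices of a facet): 0234a, 023ad, 123ae, 123cd, 13acd, 14abd, 14acd, 234ae, 23abf, 23acd, 24abf, 4abcd, 0123d, 0126d, 0134e, 013ad, 013ae, 0145f, 014be, 014bf, 0156g, 015ad, 015ae, 015be, 015bf, 015cd, 015cg, 016cd, 016cg, 0245f, 024af, 0256g, 025bf, 025bg, 026ad, 026af, 026bf, 026bg, 034ae, 04abe, 04abf, 05acd, 05ace, 05bce, 05bcg, 06abe, 06abf, 06acd, 06ace, 06bce, 06bcg, 1234e, 123ag, 123cg, 1245f, 124ae, 124ag, 124bf, 124bg, 1256g, 125bf, 125bg, 126cd, 126cg, 13acg, 14abe, 14acg, 14bcd, 14bcg, 15abd, 15abe, 15bcd, 15bcg, 23abg, 23acf, 23bcf, 23bcg, 24abg, 26acd, 26acf, 26bcf, 26bcg, 3abfg, 3acfg, 3bcfg, 4abcg, 5abde, 5acde, 5bcde, 6abef, 6acef, 6bcef, and which in addition has exactly two non-simplicial facets, its two bases, with vertex sets $\{0,1,\dots,6\}$ and $\{a,b,\dots,g\}$. Then $\Pi$ is not realizable: there is no convex $5$-polytope whose boundary complex is combinatorially isomorphic to $\Pi$.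
   Context: A topological prismatoid (Criado–Santos) is a combinatorial abstraction of a geometric prismatoid, i.e. of a polytope all of whose vertices lie in two parallel facets (the bases); all other facets are here simplices. *)

(* Defs.v *)
From mathcomp Require Import all_boot all_order all_algebra.
From mathcomp Require Import reals.
Set Implicit Arguments. Unset Strict Implicit. Unset Printing Implicit Defensive.
Import Order.TTheory GRing.Theory Num.Theory.
Local Open Scope ring_scope.

(* Vertex labels: 0..6 are the vertices 0..6, and 7..13 are a..g. *)
Definition Pi_simplicial_raw : seq (seq nat) :=
  [:: [:: 0; 2; 3; 4; 7];
  [:: 0; 2; 3; 7; 10];
  [:: 1; 2; 3; 7; 11];
  [:: 1; 2; 3; 9; 10];
  [:: 1; 3; 7; 9; 10];
  [:: 1; 4; 7; 8; 10];
  [:: 1; 4; 7; 9; 10];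
  [:: 2; 3; 4; 7; 11];
  [:: 2; 3; 7; 8; 12];
  [:: 2; 3; 7; 9; 10];
  [:: 2; 4; 7; 8; 12];
  [:: 4; 7; 8; 9; 10];
  [:: 0; 1; 2; 3; 10];
  [:: 0; 1; 2; 6; 10];
  [:: 0; 1; 3; 4; 11];
  [:: 0; 1; 3; 7; 10];
  [:: 0; 1; 3; 7; 11];
  [:: 0; 1; 4; 5; 12];
  [:: 0; 1; 4; 8; 11];
  [:: 0; 1; 4; 8; 12];
  [:: 0; 1; 5; 6; 13];
  [:: 0; 1; 5; 7; 10];
  [:: 0; 1; 5; 7; 11];
  [:: 0; 1; 5; 8; 11];
  [:: 0; 1; 5; 8; 12];
  [:: 0; 1; 5; 9; 10];
  [:: 0; 1; 5; 9; 13];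
  [:: 0; 1; 6; 9; 10];
  [:: 0; 1; 6; 9; 13];
  [:: 0; 2; 4; 5; 12];
  [:: 0; 2; 4; 7; 12];
  [:: 0; 2; 5; 6; 13];
  [:: 0; 2; 5; 8; 12];
  [:: 0; 2; 5; 8; 13];
  [:: 0; 2; 6; 7; 10];
  [:: 0; 2; 6; 7; 12];
  [:: 0; 2; 6; 8; 12];
  [:: 0; 2; 6; 8; 13];
  [:: 0; 3; 4; 7; 11];
  [:: 0; 4; 7; 8; 11];
  [:: 0; 4; 7; 8; 12];
  [:: 0; 5; 7; 9; 10];
  [:: 0; 5; 7; 9; 11];
  [:: 0; 5; 8; 9; 11];
  [:: 0; 5; 8; 9; 13];
  [:: 0; 6; 7; 8; 11];
  [:: 0; 6; 7; 8; 12];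
  [:: 0; 6; 7; 9; 10];
  [:: 0; 6; 7; 9; 11];
  [:: 0; 6; 8; 9; 11];
  [:: 0; 6; 8; 9; 13];
  [:: 1; 2; 3; 4; 11];
  [:: 1; 2; 3; 7; 13];
  [:: 1; 2; 3; 9; 13];
  [:: 1; 2; 4; 5; 12];
  [:: 1; 2; 4; 7; 11];
  [:: 1; 2; 4; 7; 13];
  [:: 1; 2; 4; 8; 12];
  [:: 1; 2; 4; 8; 13];
  [:: 1; 2; 5; 6; 13];
  [:: 1; 2; 5; 8; 12];
  [:: 1; 2; 5; 8; 13];
  [:: 1; 2; 6; 9; 10];
  [:: 1; 2; 6; 9; 13];
  [:: 1; 3; 7; 9; 13];
  [:: 1; 4; 7; 8; 11];
  [:: 1; 4; 7; 9; 13];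
  [:: 1; 4; 8; 9; 10];
  [:: 1; 4; 8; 9; 13];
  [:: 1; 5; 7; 8; 10];
  [:: 1; 5; 7; 8; 11];
  [:: 1; 5; 8; 9; 10];
  [:: 1; 5; 8; 9; 13];
  [:: 2; 3; 7; 8; 13];
  [:: 2; 3; 7; 9; 12];
  [:: 2; 3; 8; 9; 12];
  [:: 2; 3; 8; 9; 13];
  [:: 2; 4; 7; 8; 13];
  [:: 2; 6; 7; 9; 10];
  [:: 2; 6; 7; 9; 12];
  [:: 2; 6; 8; 9; 12];
  [:: 2; 6; 8; 9; 13];
  [:: 3; 7; 8; 12; 13];
  [:: 3; 7; 9; 12; 13];
  [:: 3; 8; 9; 12; 13];
  [:: 4; 7; 8; 9; 13];
  [:: 5; 7; 8; 10; 11];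
  [:: 5; 7; 9; 10; 11];
  [:: 5; 8; 9; 10; 11];
  [:: 6; 7; 8; 11; 12];
  [:: 6; 7; 9; 11; 12];
  [:: 6; 8; 9; 11; 12]].

Definition lbl_set (s : seq nat) : {set 'I_14} := [set i : 'I_14 | nat_of_ord i \in s].

Definition Pi_facets : seq {set 'I_14} :=
  map lbl_set Pi_simplicial_raw ++
  [:: lbl_set (iota 0 7); lbl_set (iota 7 7)].

Definition dot5 (R : realType) (w x : 'rV[R]_5) : R := \sum_(k < 5) w 0 k * x 0 k.

(* S is the vertex-index set of a face of conv(p i) : some (possibly trivial)
   valid linear inequality <w,x> <= c is tight exactly at the p i with i in S. *)
Definition is_face (R : realType) (p : 'I_14 -> 'rV[R]_5) (S : {set 'I_14}) : Prop :=
  exists (w : 'rV[R]_5) (c : R),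
    forall i, dot5 w (p i) <= c /\ (dot5 w (p i) == c) = (i \in S).

Definition is_facet (R : realType) (p : 'I_14 -> 'rV[R]_5) (S : {set 'I_14}) : Prop :=
  [/\ is_face p S, S != setT &
       forall T, is_face p T -> T != setT -> S \subset T -> T = S].

(* The points p i affinely span R^5, i.e. conv(p) is a 5-polytope. *)
Definition full_dim (R : realType) (p : 'I_14 -> 'rV[R]_5) : Prop :=
  forall (w : 'rV[R]_5) (c : R), (forall i, dot5 w (p i) = c) -> w = 0.

(* Since the face
   lattice of a polytope is determined by its vertex-facet incidences, this is
   a combinatorial isomorphism of the boundary complex with Pi. *)
Definition realizes_Pi (R : realType) (p : 'I_14 -> 'rV[R]_5) : Prop :=
  [/\ full_dim p,
       (forall i, is_face p [set i]) &
       (forall S, is_facet p S <-> S \in Pi_facets)].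

(* Main.v *)
Require Import Defs.
From mathcomp Require Import all_boot all_order all_algebra.
From mathcomp Require Import reals.
From mathcomp Require Import zify ring lra.
Set Implicit Arguments. Unset Strict Implicit. Unset Printing Implicit Defensive.
Import Order.TTheory GRing.Theory Num.Theory.
Local Open Scope ring_scope.

Section Cr.
Variable R : realType.
Variable p : 'I_14 -> 'rV[R]_5.

Definition q (i : 'I_14) : 'rV[R]_6 :=
  \row_(j < 6) (if (j < 5)%N then p i 0 (inord j) else 1).

Definition lin (c x : 'rV[R]_6) : R := \sum_(j < 6) x 0 j * c 0 j.

Definition Amat (l : seq nat) (m : nat) : 'M[R]_(m, 6) :=
  \matrix_(r < m, j < 6) q (inord (nth 0%N l r)) 0 j.

Definition D (l : seq nat) : R := \det (Amat l 6).

Definition remk (k : nat) (l : seq nat) := take k l ++ drop k.+1 l.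

Lemma nth_remk (l : seq nat) (k r : nat) :
  nth 0%N (remk k l) r = nth 0%N l (bump k r).
Proof.
rewrite /remk /bump.
case: (ltnP k (size l)) => hk.
  rewrite nth_cat size_take hk.
  case: (ltnP r k) => hr.
    by rewrite nth_take // add0n.
  rewrite nth_drop; congr nth.
  rewrite add1n; lia.
rewrite take_oversize ?drop_oversize; try lia.
rewrite cats0; case: (leqP k r) => hkr //; rewrite !nth_default //; lia.
Qed.

Lemma cramer (l : seq nat) (c : 'rV[R]_6) :
  \sum_(k < 7) (-1) ^+ k * D (remk k l) * lin c (q (inord (nth 0%N l k))) = 0.
Proof.
pose A := Amat l 7.
pose M : 'M[R]_7 := row_mx A (A *m c^T).
have hM : M = A *m row_mx 1%:M c^T by rewrite mul_mx_row mulmx1.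
have det0 : \det M = 0.
  apply/eqP; apply: contraT => hd.
  have : row_free M by rewrite row_free_unit unitmxE unitfE.
  rewrite /row_free => /eqP hr.
  have := mxrankM_maxl A (row_mx 1%:M c^T); rewrite -hM hr.
  by have := rank_leq_col A; lia.
apply: (etrans _ det0); rewrite (expand_det_col M ord_max).
apply: eq_bigr => i _.
rewrite /cofactor.
have -> : M i ord_max = lin c (q (inord (nth 0%N l i))).
  have -> : (ord_max : 'I_7) = rshift 6 (0 : 'I_1) by apply/val_inj.
  rewrite /M (row_mxEr A (A *m c^T)) !mxE /lin; apply: eq_bigr => j _; rewrite !mxE.
  by [].
have -> : row' i (col' ord_max M) = Amat (remk i l) 6.
  apply/matrixP => r j; rewrite !mxE.
  have -> : lift (ord_max : 'I_7) j = lshift 1 j.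
    by apply/val_inj; rewrite /= /bump leqNgt ltn_ord.
  have -> : split (lshift 1 j) = inl j by exact: (unsplitK (inl j)).
  rewrite !mxE nth_remk.
  by [].
have h6 : (-1) ^+ 6 = 1 :> R by rewrite -signr_odd /= expr0.
rewrite /D (exprD (-1) i 6) h6 mulr1.
by rewrite mulrC mulrA.
Qed.

Lemma cramer7 (a0 a1 a2 a3 a4 a5 a6 : nat) (c : 'rV[R]_6) :
  D [:: a1; a2; a3; a4; a5; a6] * lin c (q (inord a0))
  - D [:: a0; a2; a3; a4; a5; a6] * lin c (q (inord a1))
  + D [:: a0; a1; a3; a4; a5; a6] * lin c (q (inord a2))
  - D [:: a0; a1; a2; a4; a5; a6] * lin c (q (inord a3))
  + D [:: a0; a1; a2; a3; a5; a6] * lin c (q (inord a4))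
  - D [:: a0; a1; a2; a3; a4; a6] * lin c (q (inord a5))
  + D [:: a0; a1; a2; a3; a4; a5] * lin c (q (inord a6)) = 0.
Proof.
have := cramer [:: a0; a1; a2; a3; a4; a5; a6] c.
rewrite !big_ord_recr big_ord0 /=.
move=> <-.
rewrite /remk /= !expr0 !exprS !expr0 ; ring.
Qed.

Definition cvec (w : 'rV[R]_5) (c0 : R) : 'rV[R]_6 :=
  \row_(j < 6) (if (j < 5)%N then w 0 (inord j) else - c0).

Lemma lin_cvec w c0 i : lin (cvec w c0) (q i) = dot5 w (p i) - c0.
Proof.
rewrite /lin /dot5 big_ord_recr /= !mxE /=.
rewrite mul1r; congr (_ + _).
apply: eq_bigr => j _; rewrite !mxE /= ltn_ord mulrC.
by have -> : (inord j : 'I_5) = j by apply/val_inj; rewrite /= inordK // ltnW.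
Qed.

Lemma linB (a b : R) (c1 c2 x : 'rV[R]_6) :
  lin (a *: c1 - b *: c2) x = a * lin c1 x - b * lin c2 x.
Proof.
rewrite /lin mulr_sumr mulr_sumr -sumrB; apply: eq_bigr => j _.
rewrite !mxE; ring.
Qed.

Lemma lin_vA (l : seq nat) (c : 'rV[R]_6) (v : 'rV[R]_6) :
  lin c (v *m Amat l 6) = \sum_(r < 6) v 0 r * lin c (q (inord (nth 0%N l r))).
Proof.
rewrite /lin.
under eq_bigr do rewrite !mxE mulr_suml.
rewrite exchange_big /=; apply: eq_bigr => r _.
rewrite mulr_sumr; apply: eq_bigr => j _; rewrite !mxE; ring.
Qed.

Lemma D_neq0 (l : seq nat) :
  (forall v : 'rV[R]_6, v *m Amat l 6 = 0 -> v = 0) -> D l != 0.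
Proof.
move=> h; rewrite /D -unitfE -unitmxE -row_free_unit.
exact: inj_row_free.
Qed.

Lemma sum6 (f : 'I_6 -> R) :
  \sum_(r < 6) f r = f (inord 0) + f (inord 1) + f (inord 2) + f (inord 3)
                     + f (inord 4) + f (inord 5).
Proof.
rewrite !big_ord_recl big_ord0 addr0 /= !addrA.
by repeat congr (_ + _); congr f; apply/val_inj; rewrite /= inordK.
Qed.


Lemma lin0 (c : 'rV[R]_6) : lin c 0 = 0.
Proof. by rewrite /lin big1 // => j _; rewrite mxE mul0r. Qed.

Lemma dep_eq (l : seq nat) (v : 'rV[R]_6) (c : 'rV[R]_6) :
  v *m Amat l 6 = 0 ->
  \sum_(r < 6) v 0 r * lin c (q (inord (nth 0%N l r))) = 0.
Proof. by move=> hv; rewrite -lin_vA hv lin0. Qed.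

Lemma row6_0 (v : 'rV[R]_6) :
  v 0 (inord 0) = 0 -> v 0 (inord 1) = 0 -> v 0 (inord 2) = 0 ->
  v 0 (inord 3) = 0 -> v 0 (inord 4) = 0 -> v 0 (inord 5) = 0 -> v = 0.
Proof.
move=> h0 h1 h2 h3 h4 h5; apply/rowP => j; rewrite mxE.
have -> : j = inord j by apply/val_inj; rewrite /= inordK.
case: j => [[|[|[|[|[|[|//]]]]]] hj] //=.
Qed.

Lemma prod0 (x s : R) : s < 0 -> x * s = 0 -> x = 0.
Proof. by move=> hs /eqP; rewrite mulf_eq0 (negbTE (ltr0_neq0 hs)) orbF => /eqP. Qed.

Lemma facet_wit (hfac : forall S, is_facet p S <-> S \in Pi_facets) (l : seq nat) :
  lbl_set l \in Pi_facets ->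
  exists c : 'rV[R]_6, forall n, (n < 14)%N ->
    (n \in l -> lin c (q (inord n)) = 0) /\ (n \notin l -> lin c (q (inord n)) < 0).
Proof.
move=> /hfac [[w [c0 H]] _ _]; exists (cvec w c0) => n hn; rewrite lin_cvec.
have [hle heq] := H (inord n).
rewrite inE inordK // in heq.
split => hl.
  by apply/eqP; rewrite subr_eq0 heq hl.
by rewrite subr_lt0 lt_neqAle hle heq (negbTE hl).
Qed.

End Cr.

Lemma mem_raw (l : seq nat) : l \in Pi_simplicial_raw -> lbl_set l \in Pi_facets.
Proof. by move=> h; rewrite mem_cat map_f. Qed.

Lemma mem_B1 : lbl_set (iota 0 7) \in Pi_facets.
Proof. by rewrite mem_cat orbC !inE eqxx. Qed.


Theorem mainTheorem5 (R : realType) :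
  ~ exists p : 'I_14 -> 'rV[R]_5, realizes_Pi p.
Proof.
case=> p [_ _ hfac].
have W := facet_wit hfac.
have [cB HB] := W (iota 0 7) mem_B1.
have [c0123d H0123d] := W [:: 0; 1; 2; 3; 10] (@mem_raw [:: 0; 1; 2; 3; 10] erefl).
have [c0126d H0126d] := W [:: 0; 1; 2; 6; 10] (@mem_raw [:: 0; 1; 2; 6; 10] erefl).
have [c123ag H123ag] := W [:: 1; 2; 3; 7; 13] (@mem_raw [:: 1; 2; 3; 7; 13] erefl).
have [c124ag H124ag] := W [:: 1; 2; 4; 7; 13] (@mem_raw [:: 1; 2; 4; 7; 13] erefl).
have [c026bf H026bf] := W [:: 0; 2; 6; 8; 12] (@mem_raw [:: 0; 2; 6; 8; 12] erefl).
have [c026af H026af] := W [:: 0; 2; 6; 7; 12] (@mem_raw [:: 0; 2; 6; 7; 12] erefl).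
have [c026bg H026bg] := W [:: 0; 2; 6; 8; 13] (@mem_raw [:: 0; 2; 6; 8; 13] erefl).
have [c24abg H24abg] := W [:: 2; 4; 7; 8; 13] (@mem_raw [:: 2; 4; 7; 8; 13] erefl).
have [c24abf H24abf] := W [:: 2; 4; 7; 8; 12] (@mem_raw [:: 2; 4; 7; 8; 12] erefl).
have [c024af H024af] := W [:: 0; 2; 4; 7; 12] (@mem_raw [:: 0; 2; 4; 7; 12] erefl).
have [c025bf H025bf] := W [:: 0; 2; 5; 8; 12] (@mem_raw [:: 0; 2; 5; 8; 12] erefl).
have [c06abf H06abf] := W [:: 0; 6; 7; 8; 12] (@mem_raw [:: 0; 6; 7; 8; 12] erefl).
have [c26bcf H26bcf] := W [:: 2; 6; 8; 9; 12] (@mem_raw [:: 2; 6; 8; 9; 12] erefl).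
have [c0234a H0234a] := W [:: 0; 2; 3; 4; 7] (@mem_raw [:: 0; 2; 3; 4; 7] erefl).
have [c234ae H234ae] := W [:: 2; 3; 4; 7; 11] (@mem_raw [:: 2; 3; 4; 7; 11] erefl).
have [c034ae H034ae] := W [:: 0; 3; 4; 7; 11] (@mem_raw [:: 0; 3; 4; 7; 11] erefl).
have [c023ad H023ad] := W [:: 0; 2; 3; 7; 10] (@mem_raw [:: 0; 2; 3; 7; 10] erefl).
pose Phi := lin c124ag (q p (inord 0)) *: c123ag - lin c123ag (q p (inord 0)) *: c124ag.
have zPhi0 : lin Phi (q p (inord 0)) = 0.
  rewrite /Phi linB ; ring.
have zPhi1 : lin Phi (q p (inord 1)) = 0.
  rewrite /Phi linB ((H123ag 1 erefl).1 erefl) ((H124ag 1 erefl).1 erefl); ring.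
have zPhi2 : lin Phi (q p (inord 2)) = 0.
  rewrite /Phi linB ((H123ag 2 erefl).1 erefl) ((H124ag 2 erefl).1 erefl); ring.
have zPhi7 : lin Phi (q p (inord 7)) = 0.
  rewrite /Phi linB ((H123ag 7 erefl).1 erefl) ((H124ag 7 erefl).1 erefl); ring.
have zPhi13 : lin Phi (q p (inord 13)) = 0.
  rewrite /Phi linB ((H123ag 13 erefl).1 erefl) ((H124ag 13 erefl).1 erefl); ring.
have Phi3 : lin Phi (q p (inord 3)) < 0.
  rewrite /Phi linB ((H123ag 3 erefl).1 erefl).
  have := (H123ag 0 erefl).2 erefl; have := (H124ag 3 erefl).2 erefl; nra.
have Phi4 : 0 < lin Phi (q p (inord 4)).
  rewrite /Phi linB ((H124ag 4 erefl).1 erefl).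
  have := (H124ag 0 erefl).2 erefl; have := (H123ag 4 erefl).2 erefl; nra.
have E0 := cramer7 p 0 1 2 6 7 8 12 cB.
rewrite ((HB 0 erefl).1 erefl) ((HB 1 erefl).1 erefl) ((HB 2 erefl).1 erefl) ((HB 6 erefl).1 erefl) in E0.
have E1 := cramer7 p 0 1 2 6 7 8 13 cB.
rewrite ((HB 0 erefl).1 erefl) ((HB 1 erefl).1 erefl) ((HB 2 erefl).1 erefl) ((HB 6 erefl).1 erefl) in E1.
have E2 := cramer7 p 0 1 2 3 4 6 7 Phi.
rewrite (zPhi0) (zPhi1) (zPhi2) (zPhi7) in E2.
have E3 := cramer7 p 0 1 2 3 6 7 13 Phi.
rewrite (zPhi0) (zPhi1) (zPhi2) (zPhi7) (zPhi13) in E3.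
have E4 := cramer7 p 0 1 2 3 4 6 7 c0123d.
rewrite ((H0123d 0 erefl).1 erefl) ((H0123d 1 erefl).1 erefl) ((H0123d 2 erefl).1 erefl) ((H0123d 3 erefl).1 erefl) in E4.
have E5 := cramer7 p 0 1 2 3 4 6 7 c0126d.
rewrite ((H0126d 0 erefl).1 erefl) ((H0126d 1 erefl).1 erefl) ((H0126d 2 erefl).1 erefl) ((H0126d 6 erefl).1 erefl) in E5.
have E6 := cramer7 p 0 1 2 3 4 6 7 cB.
rewrite ((HB 0 erefl).1 erefl) ((HB 1 erefl).1 erefl) ((HB 2 erefl).1 erefl) ((HB 3 erefl).1 erefl) ((HB 4 erefl).1 erefl) ((HB 6 erefl).1 erefl) in E6.
have E7 := cramer7 p 0 1 2 6 7 8 12 c026bf.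
rewrite ((H026bf 0 erefl).1 erefl) ((H026bf 2 erefl).1 erefl) ((H026bf 6 erefl).1 erefl) ((H026bf 8 erefl).1 erefl) ((H026bf 12 erefl).1 erefl) in E7.
have E8 := cramer7 p 0 1 2 6 7 8 12 c026af.
rewrite ((H026af 0 erefl).1 erefl) ((H026af 2 erefl).1 erefl) ((H026af 6 erefl).1 erefl) ((H026af 7 erefl).1 erefl) ((H026af 12 erefl).1 erefl) in E8.
have E9 := cramer7 p 0 1 2 6 8 12 13 c026bf.
rewrite ((H026bf 0 erefl).1 erefl) ((H026bf 2 erefl).1 erefl) ((H026bf 6 erefl).1 erefl) ((H026bf 8 erefl).1 erefl) ((H026bf 12 erefl).1 erefl) in E9.
have E10 := cramer7 p 0 1 2 6 8 12 13 c026bg.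
rewrite ((H026bg 0 erefl).1 erefl) ((H026bg 2 erefl).1 erefl) ((H026bg 6 erefl).1 erefl) ((H026bg 8 erefl).1 erefl) ((H026bg 13 erefl).1 erefl) in E10.
have E11 := cramer7 p 0 1 2 3 4 7 13 c123ag.
rewrite ((H123ag 1 erefl).1 erefl) ((H123ag 2 erefl).1 erefl) ((H123ag 3 erefl).1 erefl) ((H123ag 7 erefl).1 erefl) ((H123ag 13 erefl).1 erefl) in E11.
have E12 := cramer7 p 1 2 3 4 7 8 13 c124ag.
rewrite ((H124ag 1 erefl).1 erefl) ((H124ag 2 erefl).1 erefl) ((H124ag 4 erefl).1 erefl) ((H124ag 7 erefl).1 erefl) ((H124ag 13 erefl).1 erefl) in E12.
have E13 := cramer7 p 1 2 4 7 8 12 13 c24abg.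
rewrite ((H24abg 2 erefl).1 erefl) ((H24abg 4 erefl).1 erefl) ((H24abg 7 erefl).1 erefl) ((H24abg 8 erefl).1 erefl) ((H24abg 13 erefl).1 erefl) in E13.
have E14 := cramer7 p 0 2 4 7 8 12 13 c24abf.
rewrite ((H24abf 2 erefl).1 erefl) ((H24abf 4 erefl).1 erefl) ((H24abf 7 erefl).1 erefl) ((H24abf 8 erefl).1 erefl) ((H24abf 12 erefl).1 erefl) in E14.
have E15 := cramer7 p 0 2 4 6 7 8 12 c024af.
rewrite ((H024af 0 erefl).1 erefl) ((H024af 2 erefl).1 erefl) ((H024af 4 erefl).1 erefl) ((H024af 7 erefl).1 erefl) ((H024af 12 erefl).1 erefl) in E15.
have E16 := cramer7 p 0 1 2 4 6 7 12 c026af.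
rewrite ((H026af 0 erefl).1 erefl) ((H026af 2 erefl).1 erefl) ((H026af 6 erefl).1 erefl) ((H026af 7 erefl).1 erefl) ((H026af 12 erefl).1 erefl) in E16.
have N0123d_4 : lin c0123d (q p (inord 4)) < 0 := ((H0123d 4 erefl).2 erefl).
have N0123d_6 : lin c0123d (q p (inord 6)) < 0 := ((H0123d 6 erefl).2 erefl).
have N0123d_7 : lin c0123d (q p (inord 7)) < 0 := ((H0123d 7 erefl).2 erefl).
have N0126d_3 : lin c0126d (q p (inord 3)) < 0 := ((H0126d 3 erefl).2 erefl).
have N0126d_4 : lin c0126d (q p (inord 4)) < 0 := ((H0126d 4 erefl).2 erefl).
have N0126d_7 : lin c0126d (q p (inord 7)) < 0 := ((H0126d 7 erefl).2 erefl).
have N024af_6 : lin c024af (q p (inord 6)) < 0 := ((H024af 6 erefl).2 erefl).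
have N024af_8 : lin c024af (q p (inord 8)) < 0 := ((H024af 8 erefl).2 erefl).
have N026af_1 : lin c026af (q p (inord 1)) < 0 := ((H026af 1 erefl).2 erefl).
have N026af_4 : lin c026af (q p (inord 4)) < 0 := ((H026af 4 erefl).2 erefl).
have N026af_8 : lin c026af (q p (inord 8)) < 0 := ((H026af 8 erefl).2 erefl).
have N026bf_1 : lin c026bf (q p (inord 1)) < 0 := ((H026bf 1 erefl).2 erefl).
have N026bf_7 : lin c026bf (q p (inord 7)) < 0 := ((H026bf 7 erefl).2 erefl).
have N026bf_13 : lin c026bf (q p (inord 13)) < 0 := ((H026bf 13 erefl).2 erefl).
have N026bg_1 : lin c026bg (q p (inord 1)) < 0 := ((H026bg 1 erefl).2 erefl).
have N026bg_12 : lin c026bg (q p (inord 12)) < 0 := ((H026bg 12 erefl).2 erefl).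
have N123ag_0 : lin c123ag (q p (inord 0)) < 0 := ((H123ag 0 erefl).2 erefl).
have N123ag_4 : lin c123ag (q p (inord 4)) < 0 := ((H123ag 4 erefl).2 erefl).
have N124ag_3 : lin c124ag (q p (inord 3)) < 0 := ((H124ag 3 erefl).2 erefl).
have N124ag_8 : lin c124ag (q p (inord 8)) < 0 := ((H124ag 8 erefl).2 erefl).
have N24abf_0 : lin c24abf (q p (inord 0)) < 0 := ((H24abf 0 erefl).2 erefl).
have N24abf_13 : lin c24abf (q p (inord 13)) < 0 := ((H24abf 13 erefl).2 erefl).
have N24abg_1 : lin c24abg (q p (inord 1)) < 0 := ((H24abg 1 erefl).2 erefl).
have N24abg_12 : lin c24abg (q p (inord 12)) < 0 := ((H24abg 12 erefl).2 erefl).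
have NB_7 : lin cB (q p (inord 7)) < 0 := ((HB 7 erefl).2 erefl).
have NB_8 : lin cB (q p (inord 8)) < 0 := ((HB 8 erefl).2 erefl).
have NB_12 : lin cB (q p (inord 12)) < 0 := ((HB 12 erefl).2 erefl).
have NB_13 : lin cB (q p (inord 13)) < 0 := ((HB 13 erefl).2 erefl).
have nzE : D p [:: 0; 1; 2; 6; 8; 12] != 0.
  apply: D_neq0 => v hv.
  have v1 : v 0 (inord 1) = 0.
    have K := dep_eq c026bf hv; rewrite sum6 !inordK // /= in K.
    apply: (prod0 ((H026bf 1 erefl).2 erefl)); rewrite -K ((H026bf 0 erefl).1 erefl) ((H026bf 2 erefl).1 erefl) ((H026bf 6 erefl).1 erefl) ((H026bf 8 erefl).1 erefl) ((H026bf 12 erefl).1 erefl) ; ring.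
  have v5 : v 0 (inord 5) = 0.
    have K := dep_eq c026bg hv; rewrite sum6 !inordK // /= in K.
    apply: (prod0 ((H026bg 12 erefl).2 erefl)); rewrite -K ((H026bg 0 erefl).1 erefl) ((H026bg 2 erefl).1 erefl) ((H026bg 6 erefl).1 erefl) ((H026bg 8 erefl).1 erefl) v1; ring.
  have v4 : v 0 (inord 4) = 0.
    have K := dep_eq c026af hv; rewrite sum6 !inordK // /= in K.
    apply: (prod0 ((H026af 8 erefl).2 erefl)); rewrite -K ((H026af 0 erefl).1 erefl) ((H026af 2 erefl).1 erefl) ((H026af 6 erefl).1 erefl) ((H026af 12 erefl).1 erefl) v1; ring.
  have v3 : v 0 (inord 3) = 0.
    have K := dep_eq c025bf hv; rewrite sum6 !inordK // /= in K.
    apply: (prod0 ((H025bf 6 erefl).2 erefl)); rewrite -K ((H025bf 0 erefl).1 erefl) ((H025bf 2 erefl).1 erefl) ((H025bf 8 erefl).1 erefl) ((H025bf 12 erefl).1 erefl) v1; ring.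
  have v2 : v 0 (inord 2) = 0.
    have K := dep_eq c06abf hv; rewrite sum6 !inordK // /= in K.
    apply: (prod0 ((H06abf 2 erefl).2 erefl)); rewrite -K ((H06abf 0 erefl).1 erefl) ((H06abf 6 erefl).1 erefl) ((H06abf 8 erefl).1 erefl) ((H06abf 12 erefl).1 erefl) v1; ring.
  have v0 : v 0 (inord 0) = 0.
    have K := dep_eq c26bcf hv; rewrite sum6 !inordK // /= in K.
    apply: (prod0 ((H26bcf 0 erefl).2 erefl)); rewrite -K ((H26bcf 2 erefl).1 erefl) ((H26bcf 6 erefl).1 erefl) ((H26bcf 8 erefl).1 erefl) ((H26bcf 12 erefl).1 erefl) v1; ring.
  exact: row6_0.
have nzS : D p [:: 0; 1; 2; 3; 4; 7] != 0.
  apply: D_neq0 => v hv.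
  have v1 : v 0 (inord 1) = 0.
    have K := dep_eq c0234a hv; rewrite sum6 !inordK // /= in K.
    apply: (prod0 ((H0234a 1 erefl).2 erefl)); rewrite -K ((H0234a 0 erefl).1 erefl) ((H0234a 2 erefl).1 erefl) ((H0234a 3 erefl).1 erefl) ((H0234a 4 erefl).1 erefl) ((H0234a 7 erefl).1 erefl) ; ring.
  have v5 : v 0 (inord 5) = 0.
    have K := dep_eq cB hv; rewrite sum6 !inordK // /= in K.
    apply: (prod0 ((HB 7 erefl).2 erefl)); rewrite -K ((HB 0 erefl).1 erefl) ((HB 1 erefl).1 erefl) ((HB 2 erefl).1 erefl) ((HB 3 erefl).1 erefl) ((HB 4 erefl).1 erefl) ; ring.
  have v0 : v 0 (inord 0) = 0.
    have K := dep_eq c234ae hv; rewrite sum6 !inordK // /= in K.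
    apply: (prod0 ((H234ae 0 erefl).2 erefl)); rewrite -K ((H234ae 2 erefl).1 erefl) ((H234ae 3 erefl).1 erefl) ((H234ae 4 erefl).1 erefl) ((H234ae 7 erefl).1 erefl) v1; ring.
  have v2 : v 0 (inord 2) = 0.
    have K := dep_eq c034ae hv; rewrite sum6 !inordK // /= in K.
    apply: (prod0 ((H034ae 2 erefl).2 erefl)); rewrite -K ((H034ae 0 erefl).1 erefl) ((H034ae 3 erefl).1 erefl) ((H034ae 4 erefl).1 erefl) ((H034ae 7 erefl).1 erefl) v1; ring.
  have v3 : v 0 (inord 3) = 0.
    have K := dep_eq c024af hv; rewrite sum6 !inordK // /= in K.
    apply: (prod0 ((H024af 3 erefl).2 erefl)); rewrite -K ((H024af 0 erefl).1 erefl) ((H024af 2 erefl).1 erefl) ((H024af 4 erefl).1 erefl) ((H024af 7 erefl).1 erefl) v1; ring.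
  have v4 : v 0 (inord 4) = 0.
    have K := dep_eq c023ad hv; rewrite sum6 !inordK // /= in K.
    apply: (prod0 ((H023ad 4 erefl).2 erefl)); rewrite -K ((H023ad 0 erefl).1 erefl) ((H023ad 2 erefl).1 erefl) ((H023ad 3 erefl).1 erefl) ((H023ad 7 erefl).1 erefl) v1; ring.
  exact: row6_0.
have Phi6 : lin Phi (q p (inord 6)) < 0.
  move: nzE; rewrite neq_lt => /orP [hE|hE].
    have S0_2_6_7_8_12 : D p [:: 0; 2; 6; 7; 8; 12] < 0 by clear -E7 N026bf_1 hE N026bf_7; nra.
    have S0_1_2_6_7_12 : 0 < D p [:: 0; 1; 2; 6; 7; 12] by clear -E8 S0_2_6_7_8_12 N026af_1 N026af_8; nra.
    have S0_2_6_8_12_13 : D p [:: 0; 2; 6; 8; 12; 13] < 0 by clear -E9 N026bf_1 hE N026bf_13; nra.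
    have S0_1_2_6_8_13 : 0 < D p [:: 0; 1; 2; 6; 8; 13] by clear -E10 S0_2_6_8_12_13 N026bg_1 N026bg_12; nra.
    have S0_2_4_6_7_12 : D p [:: 0; 2; 4; 6; 7; 12] < 0 by clear -E16 N026af_1 S0_1_2_6_7_12 N026af_4; nra.
    have S0_1_2_6_7_8 : 0 < D p [:: 0; 1; 2; 6; 7; 8] by clear -E0 hE NB_7 S0_1_2_6_7_12 NB_8 NB_12; nra.
    have S0_1_2_6_7_13 : 0 < D p [:: 0; 1; 2; 6; 7; 13] by clear -E1 S0_1_2_6_8_13 NB_7 NB_8 S0_1_2_6_7_8 NB_13; nra.
    have S0_2_4_7_8_12 : 0 < D p [:: 0; 2; 4; 7; 8; 12] by clear -E15 N024af_6 S0_2_4_6_7_12 N024af_8; nra.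
    have S2_4_7_8_12_13 : D p [:: 2; 4; 7; 8; 12; 13] < 0 by clear -E14 N24abf_0 S0_2_4_7_8_12 N24abf_13; nra.
    have S1_2_4_7_8_13 : D p [:: 1; 2; 4; 7; 8; 13] < 0 by clear -E13 S2_4_7_8_12_13 N24abg_1 N24abg_12; nra.
    have S1_2_3_4_7_13 : D p [:: 1; 2; 3; 4; 7; 13] < 0 by clear -E12 S1_2_4_7_8_13 N124ag_3 N124ag_8; nra.
    have S0_1_2_3_7_13 : 0 < D p [:: 0; 1; 2; 3; 7; 13] by clear -E11 S1_2_3_4_7_13 N123ag_0 N123ag_4; nra.
    by clear -E3 S0_1_2_6_7_13 Phi3 S0_1_2_3_7_13; nra.
    have S0_2_6_7_8_12 : 0 < D p [:: 0; 2; 6; 7; 8; 12] by clear -E7 N026bf_1 hE N026bf_7; nra.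
    have S0_1_2_6_7_12 : D p [:: 0; 1; 2; 6; 7; 12] < 0 by clear -E8 S0_2_6_7_8_12 N026af_1 N026af_8; nra.
    have S0_2_6_8_12_13 : 0 < D p [:: 0; 2; 6; 8; 12; 13] by clear -E9 N026bf_1 hE N026bf_13; nra.
    have S0_1_2_6_8_13 : D p [:: 0; 1; 2; 6; 8; 13] < 0 by clear -E10 S0_2_6_8_12_13 N026bg_1 N026bg_12; nra.
    have S0_2_4_6_7_12 : 0 < D p [:: 0; 2; 4; 6; 7; 12] by clear -E16 N026af_1 S0_1_2_6_7_12 N026af_4; nra.
    have S0_1_2_6_7_8 : D p [:: 0; 1; 2; 6; 7; 8] < 0 by clear -E0 hE NB_7 S0_1_2_6_7_12 NB_8 NB_12; nra.
    have S0_1_2_6_7_13 : D p [:: 0; 1; 2; 6; 7; 13] < 0 by clear -E1 S0_1_2_6_8_13 NB_7 NB_8 S0_1_2_6_7_8 NB_13; nra.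
    have S0_2_4_7_8_12 : D p [:: 0; 2; 4; 7; 8; 12] < 0 by clear -E15 N024af_6 S0_2_4_6_7_12 N024af_8; nra.
    have S2_4_7_8_12_13 : 0 < D p [:: 2; 4; 7; 8; 12; 13] by clear -E14 N24abf_0 S0_2_4_7_8_12 N24abf_13; nra.
    have S1_2_4_7_8_13 : 0 < D p [:: 1; 2; 4; 7; 8; 13] by clear -E13 S2_4_7_8_12_13 N24abg_1 N24abg_12; nra.
    have S1_2_3_4_7_13 : 0 < D p [:: 1; 2; 3; 4; 7; 13] by clear -E12 S1_2_4_7_8_13 N124ag_3 N124ag_8; nra.
    have S0_1_2_3_7_13 : D p [:: 0; 1; 2; 3; 7; 13] < 0 by clear -E11 S1_2_3_4_7_13 N123ag_0 N123ag_4; nra.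
    by clear -E3 S0_1_2_6_7_13 Phi3 S0_1_2_3_7_13; nra.
have Z346 : D p [:: 0; 1; 2; 3; 4; 6] = 0.
  apply: (prod0 NB_7); rewrite -E6; ring.
rewrite Z346 in E4 E5.
move: nzS; rewrite neq_lt => /orP [hS|hS].
  have S0_1_2_3_6_7 : D p [:: 0; 1; 2; 3; 6; 7] < 0 by clear -E4 N0123d_4 hS N0123d_6; nra.
  have S0_1_2_4_6_7 : D p [:: 0; 1; 2; 4; 6; 7] < 0 by clear -E5 N0126d_3 S0_1_2_3_6_7 N0126d_4; nra.
  by clear -E2 Phi3 Phi4 Phi6 hS S0_1_2_3_6_7 S0_1_2_4_6_7; nra.
  have S0_1_2_3_6_7 : 0 < D p [:: 0; 1; 2; 3; 6; 7] by clear -E4 N0123d_4 hS N0123d_6; nra.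
  have S0_1_2_4_6_7 : 0 < D p [:: 0; 1; 2; 4; 6; 7] by clear -E5 N0126d_3 S0_1_2_3_6_7 N0126d_4; nra.
  by clear -E2 Phi3 Phi4 Phi6 hS S0_1_2_3_6_7 S0_1_2_4_6_7; nra.
Qed.
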